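(* Let $\mathbf P=\mathbf u\mathbf v^{\mathsf T}\in\mathbb R^{\mathsf M\times\mathsf N}$ with $\mathbf u\in\mathbb R^{\mathsf M}$, $\mathbf v\in\mathbb R^{\mathsf N}$, and let $j_{\max}\in\arg\max_{j}\mathbf v_j$, $j_{\min}\in\arg\min_j\mathbf v_j$. Let $x,y\in[\mathsf M]$ be users with $\mathbf u_x\ge0$ and $\mathbf u_y<0$. Let $\Delta>0$, let $S_x,S_y\subseteq[\mathsf N]$ with $j_{\max}\in S_x$ and $j_{\min}\in S_y$, and let $\widetilde{\mathbf P}\in\mathbb R^{\mathsf M\times\mathsf N}$ satisfy $|\widetilde{\mathbf P}_{xj}-\mathbf P_{xj}|\le\Delta/2$ for all $j\in S_x$ and $|\widetilde{\mathbf P}_{yj}-\mathbf P_{yj}|\le\Delta/2$ for all $j\in S_y$. Define $T_x=\{j\in S_x:\widetilde{\mathbf P}_{xj}+\Delta>\max_{t\in S_x}\widetilde{\mathbf P}_{xt}\}$ and $T_y=\{j\in S_y:\widetilde{\mathbf P}_{yj}+\Delta>\max_{t\in S_y}\widetilde{\mathbf P}_{yt}\}$. If $T_x\cap T_y\neq\emptyset$, then $\max_{t\in[\mathsf N]}\mathbf P_{xt}-\min_{t\in[\mathsf N]}\mathbf P_{xt}\le4\Delta$ or $\max_{t\in[\mathsf N]}\mathbf P_{yt}-\min_{t\in[\mathsf N]}\mathbf P_{yt}\le4\Delta$. *)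

(* Defs.v *)
From mathcomp Require Import all_boot all_order all_algebra.
Set Implicit Arguments. Unset Strict Implicit. Unset Printing Implicit Defensive.
Import Order.TTheory GRing.Theory Num.Theory.
Local Open Scope ring_scope.

(* Maximum / minimum of f over a finite set S, seeded with f s0, where s0 is
   an element of S (so the seed does not affect the value). *)
Definition setmax (R : realDomainType) (I : finType) (S : {set I}) (f : I -> R) (s0 : I) : R :=
  \big[Num.max/f s0]_(t in S) f t.
Definition setmin (R : realDomainType) (I : finType) (S : {set I}) (f : I -> R) (s0 : I) : R :=
  \big[Num.min/f s0]_(t in S) f t.

Definition rank1 (R : realDomainType) (M N : nat) (u : 'I_M -> R) (v : 'I_N -> R) : 'M[R]_(M, N) :=
  \matrix_(i < M, j < N) (u i * v j).

Definition Tset (R : realDomainType) (M N : nat) (Pt : 'M[R]_(M, N)) (i : 'I_M)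
  (S : {set 'I_N}) (s0 : 'I_N) (Delta : R) : {set 'I_N} :=
  [set j in S | setmax S (fun t => Pt i t) s0 < Pt i j + Delta].

(* Main.v *)
Require Import Defs.
From mathcomp Require Import all_boot all_order all_algebra.
From mathcomp Require Import lra.
Import Order.TTheory GRing.Theory Num.Theory.
Local Open Scope ring_scope.

Lemma setmax_le (R : realDomainType) (I : finType) (S : {set I}) (f : I -> R) s0 B :
  f s0 <= B -> (forall t, t \in S -> f t <= B) -> setmax S f s0 <= B.
Proof.
move=> h0 h; rewrite /setmax; elim/big_rec: _ => // i a iS ha.
by rewrite ge_max h.
Qed.

Lemma setmin_ge (R : realDomainType) (I : finType) (S : {set I}) (f : I -> R) s0 B :
  B <= f s0 -> (forall t, t \in S -> B <= f t) -> B <= setmin S f s0.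
Proof.
move=> h0 h; rewrite /setmin; elim/big_rec: _ => // i a iS ha.
by rewrite le_min h.
Qed.

Lemma setmax_ge (R : realDomainType) (I : finType) (S : {set I}) (f : I -> R) s0 j :
  j \in S -> f j <= setmax S f s0.
Proof.
move=> jS; rewrite /setmax (bigD1 j) //=; by rewrite le_max lexx.
Qed.

Lemma key (R : realFieldType) (a b p q D : R) : 0 <= a -> 0 < b -> 0 <= p -> 0 <= q ->
  a * p < 2 * D -> b * q < 2 * D -> a * (p + q) <= 4 * D \/ b * (p + q) <= 4 * D.
Proof.
move=> ha hb hp hq h1 h2.
have [hab|hab] := leP a b.
  left. have : a * q <= b * q by apply: ler_wpM2r.
  move=> h3. rewrite mulrDr. lra.
right. have : b * p <= a * p by apply: ler_wpM2r => //; exact: ltW.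
move=> h3. rewrite mulrDr. lra.
Qed.

Theorem mainTheorem7 (R : realFieldType) (M N : nat)
  (u : 'I_M -> R) (v : 'I_N -> R) (jmax jmin : 'I_N)
  (Hjmax : forall j, v j <= v jmax) (Hjmin : forall j, v jmin <= v j)
  (x y : 'I_M) (Hux : 0 <= u x) (Huy : u y < 0)
  (Delta : R) (HDelta : 0 < Delta)
  (Sx Sy : {set 'I_N}) (HSx : jmax \in Sx) (HSy : jmin \in Sy)
  (Pt : 'M[R]_(M, N))
  (Hx : forall j, j \in Sx -> `|Pt x j - rank1 u v x j| <= Delta / 2)
  (Hy : forall j, j \in Sy -> `|Pt y j - rank1 u v y j| <= Delta / 2) :
  Tset Pt x Sx jmax Delta :&: Tset Pt y Sy jmin Delta != set0 ->
  setmax [set: 'I_N] (fun t => rank1 u v x t) jmax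
    - setmin [set: 'I_N] (fun t => rank1 u v x t) jmax <= 4 * Delta
  \/ setmax [set: 'I_N] (fun t => rank1 u v y t) jmax
    - setmin [set: 'I_N] (fun t => rank1 u v y t) jmax <= 4 * Delta.
Proof.
case/set0Pn => j; rewrite inE /Tset !inE => /andP[/andP[jSx hTx] /andP[jSy hTy]].
have e : forall i k, rank1 u v i k = u i * v k by move=> i k; rewrite /rank1 mxE.
have mx1 : setmax [set: 'I_N] (fun t => rank1 u v x t) jmax <= u x * v jmax.
  by apply: setmax_le => [|t _]; rewrite e // ler_wpM2l.
have mx2 : u x * v jmin <= setmin [set: 'I_N] (fun t => rank1 u v x t) jmax.
  by apply: setmin_ge => [|t _]; rewrite e // ler_wpM2l.
have my1 : setmax [set: 'I_N] (fun t => rank1 u v y t) jmax <= u y * v jmin.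
  by apply: setmax_le => [|t _]; rewrite e // ler_wnM2l // ltW.
have my2 : u y * v jmax <= setmin [set: 'I_N] (fun t => rank1 u v y t) jmax.
  by apply: setmin_ge => [|t _]; rewrite e // ler_wnM2l // ltW.
have gx := @setmax_ge _ _ Sx (fun t => Pt x t) jmax _ HSx.
have gy := @setmax_ge _ _ Sy (fun t => Pt y t) jmin _ HSy.
have := Hx _ jSx; have := Hx _ HSx; have := Hy _ jSy; have := Hy _ HSy.
rewrite !e !ler_norml => /andP[a1 a2] /andP[b1 b2] /andP[c1 c2] /andP[d1 d2].
have h1 : u x * (v jmax - v j) < 2 * Delta by rewrite mulrBr; lra.
have h2 : (- u y) * (v j - v jmin) < 2 * Delta by rewrite mulrBr; lra.
have s1 : 0 < - u y by rewrite oppr_gt0.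
have s2 : 0 <= v jmax - v j by rewrite subr_ge0.
have s3 : 0 <= v j - v jmin by rewrite subr_ge0.
have [k|k] := @key _ (u x) (- u y) (v jmax - v j) (v j - v jmin) Delta Hux s1 s2 s3 h1 h2.
- left. apply: le_trans (lerB mx1 mx2) _. move: k; rewrite mulrDr !mulrBr. set a := u x * v jmax. set b := u x * v j. set c := u x * v jmin. lra.
- right. apply: le_trans (lerB my1 my2) _. move: k; rewrite mulrDr !mulrBr !mulNr. set a := u y * v jmax. set b := u y * v j. set c := u y * v jmin. lra.
Qed.
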